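(* Consider $n$ robots with positions $p_1,\dots,p_n\in\mathbb R^m$ (stacked state $\mathbf x$), communication range $R>0$, leader set $\mathcal L=\{1,\dots,l\}$ and follower set $\mathcal F=\{l+1,\dots,n\}$ with $f=n-l\ge1$. Let $r\in\mathbb Z_+$, $\delta\in\mathbb Z_+$ with $\delta\le f$, and parameters $s,s_A>0$, $q,q_A\in(0,1)$. Let $\bar\pi^r_{\mathcal F}(\delta)$ be computed by the smoothed percolation recursion below. If $\bar\pi^r_{\mathcal F}(\delta)\ge\mathbf 0_f$ componentwise, then the communication graph $\mathcal G(\mathbf x)$ is strongly $r$-robust with respect to $\mathcal L$.
   Context: $\Delta_{ij}(\mathbf x)=\|p_i-p_j\|$. The communication graph $\mathcal G(\mathbf x)=(\mathcal V,\mathcal E)$ has $\mathcal V=[n]$ and undirected edges $\{i,j\}$, $i\ne j$, with $\Delta_{ij}(\mathbf x)<R$; $\mathcal N_i$ is the neighbor set of $i$. A nonempty $\mathcal S\subseteq\mathcal V$ is $r$-reachable if some $i\in\mathcal S$ has $|\mathcal N_i\setminus\mathcal S|\ge r$; $\mathcal G$ is strongly $r$-robust with respect to $\mathcal L$ if every nonempty $\mathcal S_2\subseteq\mathcal V\setminus\mathcal L$ is $r$-reachable. Sigmoid: $\sigma_{s,q}(y)=\frac{1+q}{1+q^{-1}e^{-sy}}-q$, and $\sigma^f_{s,q}$ is its elementwise application on $\mathbb R^f$. Smoothed adjacency $\bar A(\mathbf x)\in\mathbb R^{n\times n}$: for $i\ne j$, $\bar a_{ij}(\mathbf x)=\sigma_{s_A,q_A}\big((R^2-\Delta_{ij}(\mathbf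 x)^2)^3\big)$ if $\Delta_{ij}(\mathbf x)<R$ and $\bar a_{ij}(\mathbf x)=0$ otherwise; $\bar a_{ii}=0$. Smoothed percolation: $\bar\pi^r_{\mathcal F}(0)=\mathbf 0_f$ and, for $k=1,\dots,\delta$, $\bar\pi^r_{\mathcal F}(k)=\sigma^f_{s,q}\Big(\begin{bmatrix}\mathbf 0_{f\times l}&\mathbf I_f\end{bmatrix}\bar A(\mathbf x)\begin{bmatrix}\mathbf 1_l\\ \bar\pi^r_{\mathcal F}(k-1)\end{bmatrix}-r\mathbf 1_f\Big)\in\mathbb R^f$, whose entries are denoted $\bar\pi^r_{l+1}(k),\dots,\bar\pi^r_n(k)$. *)

(* Defs.v *)
From HB Require Import structures.
From mathcomp Require Import all_boot all_order all_algebra.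
From mathcomp Require Import all_classical all_reals all_analysis.
Set Implicit Arguments. Unset Strict Implicit. Unset Printing Implicit Defensive.
Import Order.TTheory GRing.Theory Num.Theory.
Local Open Scope ring_scope.

Section Defs.
Variable R : realType.

Definition dist2 (m n : nat) (x : 'I_n -> 'rV[R]_m) (i j : 'I_n) : R :=
  \sum_(k < m) (x i 0 k - x j 0 k) ^+ 2.
Definition dist (m n : nat) (x : 'I_n -> 'rV[R]_m) (i j : 'I_n) : R :=
  Num.sqrt (dist2 x i j).

Definition neighbors (m n : nat) (Rc : R) (x : 'I_n -> 'rV[R]_m) (i : 'I_n)
  : {set 'I_n} := [set j | (j != i) && (dist x i j < Rc)].

Definition r_reachable (m n : nat) (Rc : R) (x : 'I_n -> 'rV[R]_m)
  (S : {set 'I_n}) (r : nat) : Prop :=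
  exists2 i, i \in S & (r <= #|neighbors Rc x i :\: S|)%N.

Definition strongly_robust (m n : nat) (Rc : R) (x : 'I_n -> 'rV[R]_m)
  (r : nat) (L : {set 'I_n}) : Prop :=
  forall S2 : {set 'I_n}, S2 != finset.set0 -> S2 \subset ~: L -> r_reachable Rc x S2 r.

Definition sigmoid (s q y : R) : R :=
  (1 + q) / (1 + q^-1 * expR (- (s * y))) - q.

Definition abar (m n : nat) (Rc sA qA : R) (x : 'I_n -> 'rV[R]_m) (i j : 'I_n) : R :=
  if (i != j) && (dist x i j < Rc)
  then sigmoid sA qA ((Rc ^+ 2 - dist x i j ^+ 2) ^+ 3)
  else 0.

(* Leader set L = {1..l} = indices 0..l-1 of 'I_(l+f) *)
Definition leaders (l f : nat) : {set 'I_(l + f)} := [set i : 'I_(l + f) | (i < l)%N].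

(* Smoothed percolation pibar^r_F(k) : 'I_f -> R (follower j is agent l+j) *)
Fixpoint pibar (m l f : nat) (Rc sA qA s q : R) (r : nat)
  (x : 'I_(l + f) -> 'rV[R]_m) (k : nat) : 'I_f -> R :=
  match k with
  | 0%N => fun _ => 0
  | k'.+1 => fun i =>
      sigmoid s q
        (\sum_(j < l) abar Rc sA qA x (rshift l i) (lshift f j) * 1
         + \sum_(j < f) abar Rc sA qA x (rshift l i) (rshift l j)
                          * pibar Rc sA qA s q r x k' j
         - r%:R)
  end.

End Defs.

(* Main.v *)
Require Import Defs.
From HB Require Import structures.
From mathcomp Require Import all_boot all_order all_algebra.
From mathcomp Require Import all_classical all_reals all_analysis.
From mathcomp Require Import ring lra.
Import Order.TTheory GRing.Theory Num.Theory.
Local Open Scope ring_scope.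

Section H.
Variable R : realType.

Lemma sigmoidE (s q y : R) : 0 < q ->
  sigmoid s q y = q * (1 - expR (-(s*y))) / (q + expR (-(s*y))).
Proof.
move=> q0; rewrite /sigmoid; set E := expR _.
have E0 : 0 < E := expR_gt0 _.
have h1 : q + E != 0 by rewrite gt_eqF // addr_gt0.
have h2 : 1 + q^-1 * E != 0 by rewrite gt_eqF // addr_gt0 // mulr_gt0 // invr_gt0.
have h3 : q != 0 by rewrite gt_eqF.
field; rewrite ?h1 ?h2 ?h3 //.

Qed.

Lemma sigmoid_lt1 (s q y : R) : 0 < q -> sigmoid s q y < 1.
Proof.
move=> q0; rewrite sigmoidE //; set E := expR _.
have E0 : 0 < E := expR_gt0 _.
rewrite ltr_pdivrMr ?addr_gt0 //; nra.
Qed.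

Lemma sigmoid_ge0 (s q y : R) : 0 < q -> 0 < s -> 0 <= y -> 0 <= sigmoid s q y.
Proof.
move=> q0 s0 y0; rewrite sigmoidE //.
have E1 : expR (-(s*y)) <= 1 by rewrite expR_le1 oppr_le0 mulr_ge0 // ltW.
apply: divr_ge0; last by rewrite addr_ge0 ?expR_ge0 // ltW.
by rewrite mulr_ge0 ?subr_ge0 // ltW.
Qed.

Lemma sigmoid_lt0 (s q y : R) : 0 < q -> 0 < s -> y < 0 -> sigmoid s q y < 0.
Proof.
move=> q0 s0 y0; rewrite sigmoidE //.
have E1 : 1 < expR (-(s*y)) by rewrite expR_gt1 oppr_gt0 pmulr_rlt0.
set E := expR _ in E1 *.
rewrite ltr_pdivrMr ?addr_gt0 //; nra.
Qed.

Lemma term_le (a v : R) (inN inS : bool) : 0 <= a <= 1 -> v <= 1 ->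
  (inS -> v <= 0) -> (~~ inN -> a = 0) -> a * v <= (if ~~ inS && inN then 1 else 0).
Proof.
move=> /andP[a0 a1] v1 hS hN.
case: inS hS => [/(_ isT) v0|_] /=; first by rewrite mulr_ge0_le0.
case: inN hN => [_|/(_ isT) ->]; last by rewrite mul0r.
nra.
Qed.

Lemma abar_ge0 m n Rc sA qA (x : 'I_n -> 'rV[R]_m) i j : 0 < sA -> 0 < qA ->
  0 <= abar Rc sA qA x i j.
Proof.
move=> s0 q0; rewrite /abar; case: ifP => [/andP[_ hd]|_] //.
apply: sigmoid_ge0 => //; apply: exprn_ge0; rewrite subr_ge0.
have d0 : 0 <= dist x i j := sqrtr_ge0 _.
rewrite !expr2; nra.
Qed.

Lemma abar_le1 m n Rc sA qA (x : 'I_n -> 'rV[R]_m) i j : 0 < qA ->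
  abar Rc sA qA x i j <= 1.
Proof.
move=> q0; rewrite /abar; case: ifP => _; last exact: ler01.
exact/ltW/sigmoid_lt1.
Qed.

Lemma abar_out m n Rc sA qA (x : 'I_n -> 'rV[R]_m) i j :
  j \notin neighbors Rc x i -> abar Rc sA qA x i j = 0.
Proof.
by rewrite /abar inE eq_sym => /negbTE ->.
Qed.

End H.

Theorem proposition1 (R : realType) (m l f : nat) (x : 'I_(l + f) -> 'rV[R]_m)
  (Rc : R) (r delta : nat) (s sA q qA : R) :
  (0 < f)%N -> 0 < Rc -> (0 < r)%N -> (0 < delta)%N -> (delta <= f)%N ->
  0 < s -> 0 < sA -> 0 < q < 1 -> 0 < qA < 1 ->
  (forall i : 'I_f, 0 <= pibar Rc sA qA s q r x delta i) ->
  strongly_robust Rc x r (leaders l f).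
Proof.
move=> f0 Rc0 r0 d0 df s0 sA0 /andP[q0 q1] /andP[qA0 qA1] Hpi S2 S2n0 S2L.
case: (boolP [exists i in S2, (r <= #|neighbors Rc x i :\: S2|)%N]).
  by move=> /exists_inP [i Hi Hr]; exists i.
move=> /exists_inPn Hall; exfalso.
have le1 : forall k (j : 'I_f), pibar Rc sA qA s q r x k j <= 1.
  by case=> [|k] j /=; [exact: ler01 | exact/ltW/sigmoid_lt1].
have step : forall k, (forall i : 'I_f, rshift l i \in S2 -> pibar Rc sA qA s q r x k i <= 0) ->
    forall i : 'I_f, rshift l i \in S2 -> pibar Rc sA qA s q r x k.+1 i < 0.
  move=> k Pk i iS /=; apply: sigmoid_lt0 => //; rewrite subr_lt0.
  set N := neighbors Rc x (rshift l i) :\: S2.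
  apply: (@le_lt_trans _ _ (\sum_(j < l + f) (if j \in N then 1 else 0))).
    rewrite big_split_ord /=; apply: lerD; apply: ler_sum => j _; rewrite finset.in_setD.
      apply: term_le.
      - by rewrite abar_ge0 ?abar_le1.
      - exact: lexx.
      - move=> jS; have := (fintype.subsetP S2L) _ jS.
        by rewrite !inE /= ltn_ord.
      - exact: abar_out.
    apply: term_le.
    - by rewrite abar_ge0 ?abar_le1.
    - exact: le1.
    - exact: Pk.
    - exact: abar_out.
  rewrite -big_mkcond sumr_const /= ltr_nat ltnNge.
  exact: Hall.
have Pall : forall k (i : 'I_f), rshift l i \in S2 -> pibar Rc sA qA s q r x k i <= 0.
  elim=> [|k IH] i iS; first exact: lexx.
  exact/ltW/step.
have [i iS] := set0Pn _ S2n0.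
have il : (l <= i)%N.
  by have := (fintype.subsetP S2L) _ iS; rewrite !inE /= -leqNgt.
have ilf : (i - l < f)%N by rewrite ltn_subLR // ltn_ord.
have E : rshift l (Ordinal ilf) = i by apply: val_inj => /=; rewrite subnKC.
rewrite -E in iS.
case: delta d0 df Hpi => [//|d] _ _ Hpi.
have := step d (Pall d) _ iS.
by rewrite ltNge Hpi.
Qed.
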